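(* Let $\psi$ be a bounded complexity measure, let $k\in\omega\setminus\{0,1\}$, and let $A$ be a nontrivial closed class of decision tables from $\mathcal{M}_k^\infty$. Then the function $\mathcal{H}^\infty_{\psi,A}$ is everywhere defined (i.e. defined for every $n\in\omega$) if and only if the function $L_{\psi,A}$ is everywhere defined.
   Context: Notation: $\omega=\{0,1,2,\dots\}$; $\mathcal P(\omega)$ is the set of nonempty finite subsets of $\omega$; for $k\in\omega\setminus\{0,1\}$, $E_k=\{0,1,\dots,k-1\}$. $P=\{f_i:i\in\omega\}$ is a set of attributes, $f_i\neq f_j$ for $i\ne j$. Decision tables: $\mathcal M_k^\infty$ is the set of rectangular tables filled with numbers from $E_k$, whose columns are labeled with pairwise different attributes from $P$, whose rows are pairwise different, and each row of which is labeled with a set from $\mathcal P(\omega)$ (its set of decisions). The empty table (no rows) is denoted $\Lambda$ and belongs to $\mathcal M_k^\infty$. For $T\in\mathcal M_k^\infty$: $\Delta(T)$ is the set of rows; $\Pi(T)$ is the intersection of the decision sets of all rows (common decisions); $\mathcal M_k^{\infty c}$ is the set of tables having at least one common decision, and $\Lambda\in\mathcal M_k^{\infty c}$; $\mathrm{At}(T)$ is the set of attributes labeling columns; $W(T)=|\mathrm{At}(T)|$; $N(T)$ is the number of rows. For nonempty $T$, $\Omega_k(T)$ is the set of finite words (including the empty word $\lambda$) over the alphabet $\{(f_i,\delta):f_i\in\mathrm{At}(T),\delta\in E_k\}$; for $\alpha=(f_{i_1},\delta_1)\cdots(f_{i_m},\delta_m)$, $T\alpha$ is the subtable of $T$ consisting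 of the rows having value $\delta_j$ in the column $f_{i_j}$ for all $j$, and $T\lambda=T$. Operations: for $D\subseteq\mathrm{At}(T)$, $I(D,T)$ is obtained from $T$ by deleting the columns labeled with attributes from $D$ and, in each group of rows coinciding on the remaining columns, keeping only the first row (with its decision set); $I(\mathrm{At}(T),T)=\Lambda$. For $\nu:E_k^{|\mathrm{At}(T)|}\to\mathcal P(\omega)$, $J(\nu,T)$ is obtained by replacing the decision set of each row $\bar\delta$ by $\nu(\bar\delta)$. $[T]=\{J(\nu,I(D,T)):D\subseteq\mathrm{At}(T),\ \nu:E_k^{|\mathrm{At}(T)\setminus D|}\to\mathcal P(\omega)\}$; for nonempty $A\subseteq\mathcal M_k^\infty$, $[A]=\bigcup_{T\in A}[T]$. $A$ is a closed class if $[A]=A$; it is nontrivial if it contains a nonempty table. Decision trees: a $k$-decision tree is a finite directed rooted tree with at least two nodes in which the root and the edges leaving the root are unlabeled, each terminal node is labeled with a decision from $\omega$, and each other node is labeled with an attribute from $P$, each edge leaving such a node being labeled with a number from $E_k$. $\mathrm{At}(\Gamma)$ is the set of attributes labeling nodes of $\Gamma$. For a complete path $\tau=v_1,d_1,\dots,v_m,d_m,v_{m+1}$ (from the root $v_1$ to a terminal node $v_{m+1}$), $\pi(\tau)=\lambda$ if $m=1$, and otherwise $\pi(\tau)=(f_{i_2},\delta_2)\cdots(f_{i_m},\delta_m)$ where $v_j$ is labeled $f_{i_j}$ and $d_j$ is labeled $\delta_j$; $T(\tau)=T\pi(\tau)$. For $T\ne\Lambda$, a nondeterministic decision tree for $T$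 is a $k$-decision tree $\Gamma$ with $\mathrm{At}(\Gamma)\subseteq\mathrm{At}(T)$ such that every row of $T$ belongs to $T(\tau)$ for some complete path $\tau$, and for every complete path $\tau$ either $T(\tau)=\Lambda$ or the decision at the terminal node of $\tau$ belongs to $\Pi(T(\tau))$. A deterministic decision tree for $T$ is a nondeterministic decision tree for $T$ in which, additionally, exactly one edge leaves the root and the edges leaving any node that is neither the root nor terminal are labeled with pairwise different numbers. Complexity measures: a partially bounded complexity measure is a function $\psi:P^*\to\omega$ on finite words over the alphabet $P$ such that for all words $\alpha_1,\alpha_2$: $\psi(\alpha_1)=0$ iff $\alpha_1=\lambda$; $\psi(\alpha_1)$ is invariant under permutation of the letters of $\alpha_1$; $\psi(\alpha_1)\le\psi(\alpha_1\alpha_2)$; $\psi(\alpha_1\alpha_2)\le\psi(\alpha_1)+\psi(\alpha_2)$. It is a bounded complexity measure if in addition $\psi(\alpha)\ge|\alpha|$ for every word $\alpha$. The depth is $h(\alpha)=|\alpha|$. $\psi$ is extended to finite sets by $\psi(\emptyset)=0$, $\psi(\{f_{i_1},\dots,f_{i_m}\})=\psi(f_{i_1}\cdots f_{i_m})$, and to words $(f_{i_1},\delta_1)\cdots(f_{i_m},\delta_m)$ by $\psi(f_{i_1}\cdots f_{i_m})$ ($\psi(\lambda)=0$). For a $k$-decision tree $\Gamma$, $\psi(\Gamma)=\max_\tau\psi(\pi(\tau))$ over complete paths $\tau$. For $T\ne\Lambda$, $\psi^d(T)$ (resp. $\psi^a(T)$) is the minimum of $\psi(\Gamma)$ over deterministic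 (resp. nondeterministic) decision trees $\Gamma$ for $T$; $\psi^d(\Lambda)=\psi^a(\Lambda)=0$. Further definitions: for $T\ne\Lambda$ and $n\in\omega$, $\Omega_k^n(T)=\{\alpha\in\Omega_k(T):\psi(\alpha)\le n\}$. A finite set $U\subseteq\Omega_k^n(T)$ is a $(\psi,n)$-cover of $T$ if $\bigcup_{\alpha\in U}\Delta(T\alpha)=\Delta(T)$; it is irreducible if no proper subset of $U$ is a $(\psi,n)$-cover of $T$. $l_\psi(T,n)$ is the maximum cardinality of an irreducible $(\psi,n)$-cover of $T$, and $l_\psi(\Lambda,n)=0$. For a class $A$: $L_{\psi,A}(n)$ is undefined if the set $\{l_\psi(T,n):T\in A\}$ is infinite, and otherwise equals its maximum. $\mathcal H^\infty_{\psi,A}(n)$ is undefined if the set $\{\psi^d(T):T\in A,\ \psi^a(T)\le n\}$ is infinite, and otherwise equals its maximum. *)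

(* Defs.v *)
From mathcomp Require Import all_boot.
Set Implicit Arguments. Unset Strict Implicit. Unset Printing Implicit Defensive.

(* Attributes f_i are represented by their index i : nat.
   A word over P is a seq nat; a word over the alphabet {(f_i, delta)} is a
   seq (nat * nat). *)

Definition complexity_measure (psi : seq nat -> nat) : Prop :=
  [/\ (forall a, psi a = 0 <-> a = [::]),
      (forall a b, perm_eq a b -> psi a = psi b),
      (forall a b, psi a <= psi (a ++ b)) &
      (forall a b, psi (a ++ b) <= psi a + psi b)].

Definition bounded_measure (psi : seq nat -> nat) : Prop :=
  complexity_measure psi /\ (forall a, size a <= psi a).

Definition psiw (psi : seq nat -> nat) (w : seq (nat * nat)) : nat :=
  psi (map fst w).

(* A nonempty finite subset of omega, in canonical form: a strictly
   increasing nonempty list. *)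
Definition decset (s : seq nat) : bool := sorted ltn s && (s != [::]).

(* A table: list of column attributes, and list of rows (in order); each
   row is a tuple of values together with its decision set. *)
Record table := Table { attrs : seq nat; rows : seq (seq nat * seq nat) }.

Definition empty_table : table := Table [::] [::].

(* membership in M_k^infty *)
Definition wf_table (k : nat) (T : table) : bool :=
  [&& uniq (attrs T),
      uniq (map fst (rows T)),
      all (fun r => (size r.1 == size (attrs T)) && all (fun v => v < k) r.1
                    && decset r.2) (rows T) &
      (attrs T == [::]) == (rows T == [::])].

Definition colval (T : table) (r : seq nat) (a : nat) : nat :=
  nth 0 r (index a (attrs T)).

Definition row_sat (T : table) (r : seq nat) (w : seq (nat * nat)) : bool :=
  all (fun p => (p.1 \in attrs T) && (colval T r p.1 == p.2)) w.

Definition sub_rows (T : table) (w : seq (nat * nat)) :=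
  [seq r <- rows T | row_sat T r.1 w].

(* "T alpha = Lambda, or d belongs to Pi(T alpha)": d lies in the decision
   set of every row of T alpha. *)
Definition lambda_or_common (T : table) (w : seq (nat * nat)) (d : nat) : bool :=
  all (fun r => d \in r.2) (sub_rows T w).

Fixpoint dedup_first (seen : seq (seq nat)) (rs : seq (seq nat * seq nat)) :=
  match rs with
  | [::] => [::]
  | r :: rs' => if r.1 \in seen then dedup_first seen rs'
                else r :: dedup_first (r.1 :: seen) rs'
  end.

Definition opI (D : seq nat) (T : table) : table :=
  let keep := [seq i <- iota 0 (size (attrs T)) | nth 0 (attrs T) i \notin D] in
  if keep == [::] then empty_table else
  Table [seq nth 0 (attrs T) i | i <- keep]
        (dedup_first [::] [seq ([seq nth 0 r.1 i | i <- keep], r.2) | r <- rows T]).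

Definition opJ (nu : seq nat -> seq nat) (T : table) : table :=
  Table (attrs T) [seq (r.1, nu r.1) | r <- rows T].

Definition in_bracket (T T' : table) : Prop :=
  exists (D : seq nat) (nu : seq nat -> seq nat),
    {subset D <= attrs T} /\ (forall x, decset (nu x)) /\ T' = opJ nu (opI D T).

Definition closed_class (k : nat) (A : table -> Prop) : Prop :=
  (forall T, A T -> wf_table k T) /\
  (forall T', A T' <-> exists T, A T /\ in_bracket T T').

Definition nontrivial (A : table -> Prop) : Prop :=
  exists T, A T /\ rows T <> [::].

(* A non-root node: terminal (labelled with a decision) or labelled with an
   attribute, with labelled outgoing edges (edge label, child). *)
Inductive dnode := DLeaf of nat | DNode of nat & seq (nat * dnode).

(* A k-decision tree: the unlabelled root with its (unlabelled) edges to its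
   children. *)
Definition dtree := seq dnode.

Fixpoint node_ok (det : bool) (k : nat) (v : dnode) : bool :=
  match v with
  | DLeaf _ => true
  | DNode _ ch =>
      [&& size ch > 0, all (fun e => e.1 < k) ch, det ==> uniq (map fst ch) &
          (fix aux (l : seq (nat * dnode)) : bool :=
             match l with
             | [::] => true
             | (_, c) :: l' => node_ok det k c && aux l'
             end) ch]
  end.

Fixpoint node_attrs (v : dnode) : seq nat :=
  match v with
  | DLeaf _ => [::]
  | DNode a ch =>
      a :: (fix aux (l : seq (nat * dnode)) : seq nat :=
              match l with
              | [::] => [::]
              | (_, c) :: l' => node_attrs c ++ aux l'
              end) ch
  end.

Fixpoint node_paths (v : dnode) : seq (seq (nat * nat) * nat) :=
  match v with
  | DLeaf d => [:: ([::], d)]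
  | DNode a ch =>
      (fix aux (l : seq (nat * dnode)) : seq (seq (nat * nat) * nat) :=
         match l with
         | [::] => [::]
         | (dl, c) :: l' =>
             [seq ((a, dl) :: p.1, p.2) | p <- node_paths c] ++ aux l'
         end) ch
  end.

Definition tree_ok (det : bool) (k : nat) (G : dtree) : bool :=
  [&& size G > 0, det ==> (size G == 1) & all (node_ok det k) G].

Definition tree_attrs (G : dtree) : seq nat := flatten (map node_attrs G).
Definition tree_paths (G : dtree) := flatten (map node_paths G).

Definition tree_psi (psi : seq nat -> nat) (G : dtree) : nat :=
  \max_(p <- tree_paths G) psiw psi p.1.

(* det = false : nondeterministic decision tree for T;
   det = true  : deterministic decision tree for T. *)
Definition is_tree (det : bool) (k : nat) (T : table) (G : dtree) : Prop :=
  [/\ tree_ok det k G,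
      {subset tree_attrs G <= attrs T},
      (forall r, r \in rows T -> has (fun p => row_sat T r.1 p.1) (tree_paths G)) &
      (forall p, p \in tree_paths G -> lambda_or_common T p.1 p.2)].

(* is_psi det psi k T m : m = psi^d(T) (det = true) or psi^a(T) (det = false) *)
Definition is_psi (det : bool) (psi : seq nat -> nat) (k : nat) (T : table)
    (m : nat) : Prop :=
  (rows T = [::] /\ m = 0) \/
  [/\ rows T <> [::],
      (exists G, is_tree det k T G /\ tree_psi psi G = m) &
      (forall G, is_tree det k T G -> m <= tree_psi psi G)].

Definition in_Omega_n (psi : seq nat -> nat) (k : nat) (T : table) (n : nat)
    (w : seq (nat * nat)) : bool :=
  all (fun p => (p.1 \in attrs T) && (p.2 < k)) w && (psiw psi w <= n).

Definition is_cover (psi : seq nat -> nat) (k : nat) (T : table) (n : nat)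
    (U : seq (seq (nat * nat))) : Prop :=
  (forall w, w \in U -> in_Omega_n psi k T n w) /\
  (forall r, r \in rows T -> has (row_sat T r.1) U).

Definition is_irr_cover psi k T n (U : seq (seq (nat * nat))) : Prop :=
  is_cover psi k T n U /\
  (forall V, {subset V <= U} -> ~ {subset U <= V} -> ~ is_cover psi k T n V).

(* is_l psi k T n m : m = l_psi(T, n) (cardinality of a finite set of words =
   size of a duplicate-free list) *)
Definition is_l (psi : seq nat -> nat) (k : nat) (T : table) (n m : nat) : Prop :=
  (rows T = [::] /\ m = 0) \/
  [/\ rows T <> [::],
      (exists U, uniq U /\ is_irr_cover psi k T n U /\ size U = m) &
      (forall U, uniq U -> is_irr_cover psi k T n U -> size U <= m)].

Definition finite_natset (S : nat -> Prop) : Prop :=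
  exists s : seq nat, forall x, S x <-> x \in s.

Definition L_defined psi k (A : table -> Prop) (n : nat) : Prop :=
  finite_natset (fun m => exists T, A T /\ is_l psi k T n m).

Definition H_defined psi k (A : table -> Prop) (n : nat) : Prop :=
  finite_natset (fun m => exists T, A T /\
     (exists a, is_psi false psi k T a /\ a <= n) /\ is_psi true psi k T m).

(* Main.v *)
Require Import Defs.
From mathcomp Require Import all_boot.
From Stdlib Require Import Classical.
From Stdlib Require List.
Set Implicit Arguments. Unset Strict Implicit. Unset Printing Implicit Defensive.

Lemma cmin (P : nat -> Prop) x : P x -> exists m, P m /\ forall y, P y -> m <= y.
Proof.
elim/ltn_ind: x => x IH Px.
case: (classic (exists y, P y /\ y < x)) => [[y [Py ltyx]]|H].
  exact: IH Py.
exists x; split => // y Py; rewrite leqNgt; apply/negP => lt; apply: H; by exists y.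
Qed.

Lemma cmax (P : nat -> Prop) x N : P x -> (forall y, P y -> y <= N) ->
  exists m, P m /\ forall y, P y -> y <= m.
Proof.
move=> Px HN; apply: NNPP => H.
have step : forall y, P y -> exists z, P z /\ y < z.
  move=> y Py; apply: NNPP => H2; apply: H; exists y; split => // z Pz.
  rewrite leqNgt; apply/negP => lt; apply: H2; by exists z.
have: forall j, exists y, P y /\ j <= y.
  elim => [|j [y [Py le]]]; first by exists x.
  have [z [Pz lt]] := step y Py; exists z; split => //; exact: leq_ltn_trans lt.
move/(_ N.+1) => [y [Py le]]; have := HN y Py; rewrite leqNgt.
by rewrite (leq_trans (ltnSn N) le).
Qed.

Lemma fin_bound (S : nat -> Prop) N : (forall x, S x -> x <= N) -> finite_natset S.
Proof.
move=> HN.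
have: forall j, exists s : seq nat, forall x, (S x /\ x < j) <-> x \in s.
  elim => [|j [s Hs]]; first by exists [::] => x; split => // [[_]].
  case: (classic (S j)) => Sj.
    exists (j :: s) => x; rewrite inE; split.
      case=> Sx; rewrite ltnS leq_eqVlt; case/orP => [/eqP->|lt]; first by rewrite eqxx.
      by apply/orP; right; apply/Hs.
    case/orP => [/eqP->|/Hs [Sx lt]]; first by split.
    by split => //; apply: ltnW.
  exists s => x; split.
    case=> Sx; rewrite ltnS leq_eqVlt; case/orP => [/eqP Ex|lt]; first by subst.
    by apply/Hs.
  by move/Hs => [Sx lt]; split => //; apply: ltnW.
move/(_ N.+1) => [s Hs]; exists s => x; split.
  by move=> Sx; apply/Hs; split => //; rewrite ltnS HN.
by move/Hs => [].
Qed.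

Lemma fin_bound_inv (S : nat -> Prop) : finite_natset S -> exists N, forall x, S x -> x <= N.
Proof.
case=> s Hs; exists (foldr maxn 0 s) => x /Hs; elim: s {Hs} => //= y s IH.
rewrite inE leq_max; case/orP => [/eqP->|/IH->]; first by rewrite leqnn.
by rewrite orbT.
Qed.

Lemma node_paths_node a ch : node_paths (DNode a ch) =
  flatten [seq [seq ((a, e.1) :: p.1, p.2) | p <- node_paths e.2] | e <- ch].
Proof. by elim: ch => //= [[dl c] l] /= ->. Qed.

Lemma node_ok_node det k a ch : node_ok det k (DNode a ch) =
  [&& 0 < size ch, all (fun e => e.1 < k) ch, det ==> uniq (map fst ch) &
      all (fun e => node_ok det k e.2) ch].
Proof.
rewrite /=; congr [&& _, _, _ & _].
by elim: ch => //= [[dl c] l] /= ->.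
Qed.

Lemma node_attrs_node a ch : node_attrs (DNode a ch) =
  a :: flatten [seq node_attrs e.2 | e <- ch].
Proof. by rewrite /=; congr cons; elim: ch => //= [[dl c] l] /= ->. Qed.

Fixpoint dsize (v : dnode) : nat :=
  match v with
  | DLeaf _ => 1
  | DNode _ ch => (fix aux (l : seq (nat * dnode)) : nat :=
      match l with [::] => 1 | (_, c) :: l' => dsize c + aux l' end) ch
  end.

Lemma dsize_node_gt0 a (l : seq (nat * dnode)) : 0 < dsize (DNode a l).
Proof. by elim: l => //= [[dl c] l IH]; rewrite addn_gt0 IH orbT. Qed.

Lemma dsize_child a (ch : seq (nat * dnode)) e : List.In e ch -> dsize e.2 < dsize (DNode a ch).
Proof.
elim: ch => //= [[dl c] l] IH; case => [<-|/IH] /=.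
  by rewrite -[X in X < _]addn0 ltn_add2l (dsize_node_gt0 a l).
move=> H; exact: (leq_trans H (leq_addl _ _)).
Qed.

Lemma dind (P : dnode -> Prop) :
  (forall d, P (DLeaf d)) ->
  (forall a ch, (forall e, List.In e ch -> P e.2) -> P (DNode a ch)) ->
  forall v, P v.
Proof.
move=> HL HN v; move: {2}(dsize v) (leqnn (dsize v)) => n; elim: n v.
  by case=> [d|a ch] //; rewrite leqNgt dsize_node_gt0.
move=> n IH [d|a ch] Hs; first exact: HL.
apply: HN => e ech; apply: IH; rewrite -ltnS; exact: leq_trans (dsize_child a ech) Hs.
Qed.

Lemma inflat (A : Type) (T : eqType) (F : A -> seq T) (l : seq A) x :
  x \in flatten (map F l) -> exists e, List.In e l /\ x \in F e.
Proof.
elim: l => //= e l IH; rewrite mem_cat; case/orP => [H|/IH [e' [H1 H2]]].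
  by exists e; split => //; left.
by exists e'; split => //; right.
Qed.

Lemma inflat_r (A : Type) (T : eqType) (F : A -> seq T) (l : seq A) x e :
  List.In e l -> x \in F e -> x \in flatten (map F l).
Proof.
elim: l => //= e' l IH [<-|H] Hx; rewrite mem_cat; first by rewrite Hx.
by rewrite IH // orbT.
Qed.

Lemma inmap (A : Type) (T : eqType) (f : A -> T) (l : seq A) x :
  x \in map f l -> exists e, List.In e l /\ x = f e.
Proof.
elim: l => //= e l IH; rewrite inE; case/orP => [/eqP->|/IH [e' [H1 H2]]].
  by exists e; split => //; left.
by exists e'; split => //; right.
Qed.

Lemma allIn (A : Type) (P : pred A) (l : seq A) e : all P l -> List.In e l -> P e.
Proof. by elim: l => //= e' l IH /andP[H1 H2] [<-|/IH]; [|apply]. Qed.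

Lemma path_vals det k v : node_ok det k v ->
  forall p, p \in node_paths v -> all (fun q => q.2 < k) p.1.
Proof.
elim/dind: v => [d _ p|a ch IH]; first by rewrite inE => /eqP->.
rewrite node_ok_node node_paths_node => /and4P[_ Hl _ Hok] p.
case/inflat => e [ein /mapP [p' p'in ->]] /=.
rewrite (allIn Hl ein) /=; exact: (IH e ein (allIn Hok ein) p' p'in).
Qed.

Lemma path_attrs v p : p \in node_paths v -> {subset map fst p.1 <= node_attrs v}.
Proof.
elim/dind: v p => [d p|a ch IH p]; first by rewrite inE => /eqP->.
rewrite node_paths_node node_attrs_node.
case/inflat => e [ein /mapP [p' p'in ->]] /= x; rewrite !inE.
case/orP => [->//|/(IH e ein p' p'in) H]; apply/orP; right.
exact: (@inflat_r _ _ (fun e : nat * dnode => node_attrs e.2) ch x e ein H).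
Qed.

Lemma tree_path_words det k T G p : is_tree det k T G -> p \in tree_paths G ->
  all (fun q => (q.1 \in attrs T) && (q.2 < k)) p.1.
Proof.
case=> /and3P[_ _ Hok] Hat _ _ /inflat [v [vin pin]].
have Hv := path_vals (allIn Hok vin) pin.
have Ha := path_attrs pin.
apply/allP => q qin; rewrite (allP Hv q qin) andbT; apply: Hat.
rewrite /tree_attrs; apply: (@inflat_r _ _ node_attrs G _ v vin); apply: Ha; exact: map_f.
Qed.

Lemma count_paths k v h : 0 < k -> node_ok true k v ->
  (forall p, p \in node_paths v -> size p.1 <= h) -> size (node_paths v) <= k ^ h.
Proof.
move=> k0; elim/dind: v h => [d h _ _|a ch IH h]; first by rewrite /= expn_gt0 k0.
rewrite node_ok_node node_paths_node => /and4P[_ Hl Hu Hok] Hs.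
case: h Hs => [|h] Hs.
  case E: (flatten _) => [|p ps] //; have := Hs p; rewrite E inE eqxx => /(_ isT).
  have: p \in flatten [seq [seq ((a, e.1) :: p0.1, p0.2) | p0 <- node_paths e.2] | e <- ch].
    by rewrite E inE eqxx.
  by case/inflat => e [_ /mapP [p' _ ->]].
rewrite size_flatten /shape -map_comp expnS.
have Hch : size ch <= k.
  rewrite -(size_iota 0 k) -(size_map fst ch); apply: uniq_leq_size => //.
  by move=> x /inmap [e [ein ->]]; rewrite mem_iota add0n (allIn Hl ein).
apply: (@leq_trans (size ch * k ^ h)); last by rewrite leq_mul2r Hch orbT.
elim: ch IH Hok Hs {Hl Hu Hch} => //= e ch IHc IH /andP[Hoke Hok] Hs.
rewrite mulSn; apply: leq_add.
  rewrite size_map; apply: (IH e (or_introl erefl) h Hoke) => p pin.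
  have := Hs ((a, e.1) :: p.1, p.2); rewrite mem_cat (map_f (fun p0 => ((a, e.1) :: p0.1, p0.2)) pin).
  by move/(_ isT).
apply: IHc => //.
  by move=> e' ein; apply: IH; right.
by move=> p pin; apply: Hs; rewrite mem_cat pin orbT.
Qed.

Definition leafdec (W : seq (seq (nat * nat) * nat)) (b : seq (nat * nat)) : nat :=
  nth 0 (map snd W) (find (fun p => all (fun q => q \in b) p.1) W).

Fixpoint build (k : nat) W (S : seq nat) (acc : seq (nat * nat)) : dnode :=
  match S with
  | [::] => DLeaf (leafdec W acc)
  | a :: S' => DNode a [seq (v, build k W S' (rcons acc (a, v))) | v <- iota 0 k]
  end.

Lemma map_fst_pair (g : nat -> dnode) s : map fst [seq (v, g v) | v <- s] = s.
Proof. by elim: s => //= v s ->. Qed.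

Lemma build_ok k W S acc : 0 < k -> node_ok true k (build k W S acc).
Proof.
move=> k0; elim: S acc => [|a S IH] acc //.
rewrite node_ok_node size_map size_iota k0 map_fst_pair iota_uniq /= !all_map.
apply/andP; split; apply/allP => v //=; by rewrite mem_iota.
Qed.

Lemma build_attrs k W S acc : {subset node_attrs (build k W S acc) <= S}.
Proof.
elim: S acc => [|a S IH] acc x //; rewrite node_attrs_node inE.
case/orP => [/eqP->|]; first by rewrite inE eqxx.
rewrite -map_comp => /flattenP [s /mapP [v _ ->]] /= /IH xS.
by rewrite inE xS orbT.
Qed.

Lemma build_paths k W S acc p : p \in node_paths (build k W S acc) ->
  [/\ map fst p.1 = S, all (fun q => q.2 < k) p.1 & p.2 = leafdec W (acc ++ p.1)].
Proof.
elim: S acc p => [|a S IH] acc p.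
  by rewrite inE => /eqP -> /=; rewrite cats0.
rewrite node_paths_node -map_comp.
case/flattenP => s /mapP [v vin ->] /= /mapP [p' p'in ->] /=.
have [H1 H2 H3] := IH _ _ p'in.
rewrite H1 H2 H3 cat_rcons; move: vin; rewrite mem_iota add0n => /andP [_ ->]; done.
Qed.

Lemma build_paths_r k W S acc b : map fst b = S -> all (fun q => q.2 < k) b ->
  (b, leafdec W (acc ++ b)) \in node_paths (build k W S acc).
Proof.
elim: S acc b => [|a S IH] acc [|[a' v] b] //.
  by move=> _ _; rewrite cats0 inE.
case=> -> Hb /andP [vk Hall].
rewrite node_paths_node -map_comp.
apply/flattenP; exists [seq ((a, v) :: p.1, p.2) | p <- node_paths (build k W S (rcons acc (a, v)))].
  by apply/mapP; exists v => //; rewrite mem_iota add0n.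
apply/mapP; exists (b, leafdec W (rcons acc (a, v) ++ b)) => /=.
  exact: IH.
by rewrite cat_rcons.
Qed.

Lemma psi_flatten psi (W : seq (seq (nat * nat) * nat)) : bounded_measure psi ->
  psi (flatten [seq map fst p.1 | p <- W]) <= \sum_(p <- W) psiw psi p.1.
Proof.
case=> [[H0 Hp Hm Hs] _]; elim: W => [|p W IH] /=.
  by rewrite big_nil; have [_ ->] := H0 [::].
rewrite big_cons; apply: leq_trans (Hs _ _) _; exact: leq_add.
Qed.

Lemma det_exists psi k T W : bounded_measure psi -> 0 < k -> wf_table k T ->
  (forall p, p \in W -> all (fun q => (q.1 \in attrs T) && (q.2 < k)) p.1) ->
  (forall p, p \in W -> lambda_or_common T p.1 p.2) ->
  (forall r, r \in rows T -> has (fun p => row_sat T r.1 p.1) W) ->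
  exists G, is_tree true k T G /\ tree_psi psi G <= \sum_(p <- W) psiw psi p.1.
Proof.
move=> Hpsi k0 wfT HW HWc Hcov.
set S := undup (flatten [seq map fst p.1 | p <- W]).
have SP : forall x, x \in S -> exists2 p, p \in W & exists2 q, q \in p.1 & q.1 = x.
  move=> x; rewrite mem_undup => /flattenP [s /mapP [p pW ->]] /mapP [q qin ->].
  by exists p => //; exists q.
have SA : {subset S <= attrs T}.
  move=> x /SP [p pW [q qin <-]]; by have /andP[] := allP (HW p pW) q qin.
exists [:: build k W S [::]]; split; first split.
- by rewrite /tree_ok /= build_ok.
- by move=> x; rewrite /tree_attrs /= cats0 => /build_attrs /SA.
- move=> r rin; rewrite /tree_paths /= cats0.
  case/and4P: wfT => _ _ /allP /(_ r rin) /andP [/andP [/eqP Hsz Hvals] _] _.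
  apply/hasP; exists ([seq (a, colval T r.1 a) | a <- S], leafdec W ([::] ++ [seq (a, colval T r.1 a) | a <- S])).
    apply: build_paths_r; first by rewrite -map_comp map_id.
    rewrite all_map; apply/allP => a /SA aT /=; apply: (allP Hvals); apply: mem_nth.
    by rewrite Hsz index_mem.
  rewrite /= /row_sat all_map; apply/allP => a aS /=; by rewrite SA // eqxx.
- move=> p; rewrite /tree_paths /= cats0 => /build_paths [Hf _ ->] /=.
  rewrite /lambda_or_common.
  case E: (sub_rows T p.1) => [|r rs] //.
  have: r \in sub_rows T p.1 by rewrite E inE eqxx.
  rewrite mem_filter => /andP [Hb rin].
  have /hasP [q qW Hq] := Hcov r rin.
  have Hsub : all (fun x => x \in p.1) q.1.
    apply/allP => x xin; have /andP [xA /eqP xv] := allP Hq x xin.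
    have : x.1 \in map fst p.1.
      rewrite Hf mem_undup; apply/flattenP; exists (map fst q.1); first exact: map_f.
      exact: map_f.
    case/mapP => y yin yx; have /andP [_ /eqP yv] := allP Hb y yin.
    by have -> : x = y by case: x y yx yv xv {xin xA yin} => [x1 x2] [y1 y2] /= <- <- <-.
  have Hhas : has (fun p0 => all (fun q0 => q0 \in p.1) p0.1) W by apply/hasP; exists q.
  pose i := find (fun p0 => all (fun q0 => q0 \in p.1) p0.1) W.
  have ilt : i < size W by rewrite -has_find.
  have Hi := nth_find ([::], 0) Hhas; rewrite -/i in Hi.
  have piW : nth ([::], 0) W i \in W by exact: mem_nth.
  rewrite -E /leafdec -/i (nth_map ([::], 0) 0 snd ilt).
  apply/allP => r' /[dup] r'in; rewrite mem_filter => /andP [Hb' r'T].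
  apply: (allP (HWc _ piW)); rewrite mem_filter r'T andbT.
  apply/allP => x xin; exact: (allP Hb' x (allP Hi x xin)).
- rewrite /tree_psi /tree_paths /= cats0.
  apply/bigmax_leqP_seq => p /build_paths [Hf _ _] _; rewrite /psiw Hf.
  apply: leq_trans (psi_flatten W Hpsi).
  case: Hpsi => [[_ Hp Hm _] _].
  have [s3 Hperm] := perm_to_subseq (undup_subseq (flatten [seq map fst p0.1 | p0 <- W])).
  by rewrite (Hp _ _ Hperm) Hm.
Qed.

Lemma dedup_first_id seen rs : uniq (map fst rs) ->
  all (fun r => r.1 \notin seen) rs -> dedup_first seen rs = rs.
Proof.
elim: rs seen => //= r rs IH seen /andP [rn ur] /andP [rs0 Hall].
rewrite (negbTE rs0) IH //; apply/allP => r' r'in /=; rewrite inE negb_or (allP Hall r' r'in) andbT.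
apply/eqP => E; move: rn; rewrite -E; by rewrite (map_f fst r'in).
Qed.

Lemma opI_nil k T : wf_table k T -> rows T <> [::] -> opI [::] T = T.
Proof.
case/and4P => ua ur Hall Hne rne.
have ane : attrs T != [::].
  by apply/negP => /eqP E; apply: rne; apply/eqP; move: Hne; rewrite E eqxx => /eqP <-.
rewrite /opI.
have -> : [seq i <- iota 0 (size (attrs T)) | nth 0 (attrs T) i \notin [::]] = iota 0 (size (attrs T)).
  by apply/all_filterP/allP.
have -> : (iota 0 (size (attrs T)) == [::]) = false.
  by case: (attrs T) ane.
rewrite -/(mkseq (nth 0 (attrs T)) (size (attrs T))) mkseq_nth.
have -> : [seq ([seq nth 0 r.1 i | i <- iota 0 (size (attrs T))], r.2) | r <- rows T] = rows T.
  apply: map_id_in => r rin.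
  have /andP [/andP [/eqP Hs _] _] := allP Hall r rin.
  by rewrite -Hs -/(mkseq (nth 0 r.1) (size r.1)) mkseq_nth; case: r {rin Hs}.
rewrite dedup_first_id //; first by case: T {ua ur Hall Hne rne ane}.
by apply/allP.
Qed.

Fixpoint wordsupto (X : seq (nat * nat)) n : seq (seq (nat * nat)) :=
  if n is n'.+1 then [::] :: flatten [seq [seq x :: w | w <- wordsupto X n'] | x <- X]
  else [:: [::]].

Lemma wordsupto_mem X n w : size w <= n -> all (fun x => x \in X) w -> w \in wordsupto X n.
Proof.
elim: n w => [|n IH] [|x w] //=; rewrite ?inE ?eqxx // ltnS => Hs /andP [xX Hw].
apply/orP; right; apply/flattenP; exists [seq x :: w0 | w0 <- wordsupto X n].
  exact: map_f.
by apply: map_f; apply: IH.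
Qed.

Lemma omega_bound psi k T n : bounded_measure psi ->
  exists N, forall U, uniq U -> (forall w, w \in U -> in_Omega_n psi k T n w) -> size U <= N.
Proof.
case=> _ Hsz.
exists (size (wordsupto [seq (a, v) | a <- attrs T, v <- iota 0 k] n)) => U uU HU.
apply: uniq_leq_size => // w /HU /andP [Hall Hle].
apply: wordsupto_mem.
  by rewrite -(size_map fst); apply: leq_trans Hle; exact: Hsz.
apply/allP => [[a v]] /(allP Hall) /andP [/= aT vk].
by apply: (allpairs_f (fun a v => (a, v))) => //; rewrite mem_iota.
Qed.

Lemma cover_eqmem psi k T n U U' : U =i U' -> is_cover psi k T n U -> is_cover psi k T n U'.
Proof.
move=> E [H1 H2]; split.
  by move=> w; rewrite -E; apply: H1.
by move=> r /H2; rewrite (eq_has_r E).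
Qed.

Lemma irr_sub psi k T n U0 : is_cover psi k T n U0 ->
  exists V, [/\ uniq V, is_irr_cover psi k T n V & {subset V <= U0}].
Proof.
move=> HU0.
pose P := (fun m => exists V, [/\ uniq V, is_cover psi k T n V,
     {subset V <= U0} & size V = m]).
have P0 : P (size (undup U0)).
  exists (undup U0); split => //; first exact: undup_uniq.
    exact: cover_eqmem (fun x => esym (mem_undup U0 x)) HU0.
  by move=> x; rewrite mem_undup.
have [m [[V [uV cV sV sz]] Hmin]] := cmin P0.
exists V; split => //; split => // V' sub nsub cV'.
have [x xV /negP xV'] : exists2 x, x \in V & ~~ (x \in V').
  apply: NNPP => H; apply: nsub => x xV; apply: NNPP => H2; apply: H; exists x => //.
  by apply/negP.
have := Hmin (size (undup V')); rewrite -sz.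
have -> : (size V <= size (undup V')) = false.
  apply/negbTE; rewrite -ltnNge.
  apply: (@leq_trans (size (rem x V)).+1).
    rewrite ltnS; apply: uniq_leq_size; first exact: undup_uniq.
    move=> y; rewrite mem_undup (mem_rem_uniq _ uV) => yV'; rewrite !inE.
    rewrite (sub y yV') andbT; apply/eqP => E; apply: xV'; rewrite -E //.
  by rewrite size_rem // ltn_predL; case: (V) xV.
move=> H; suff: false by []; apply: H; exists (undup V'); split => //.
- exact: undup_uniq.
- exact: cover_eqmem (fun y => esym (mem_undup V' y)) cV'.
- by move=> y; rewrite mem_undup => /sub /sV.
Qed.

Lemma special_row psi k T n U w : is_irr_cover psi k T n U -> w \in U ->
  exists r, [/\ r \in rows T, row_sat T r.1 w &
    forall w', w' \in U -> row_sat T r.1 w' -> w' = w].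
Proof.
move=> [[HU1 HU2] Hirr] wU.
pose V := filter (predC1 w) U.
have nc : ~ is_cover psi k T n V.
  apply: Hirr; first by move=> y; rewrite mem_filter => /andP [].
  by move=> H; have := H w wU; rewrite mem_filter /= eqxx.
have [r Hr] : exists r, ~ (r \in rows T -> has (row_sat T r.1) V).
  apply: NNPP => H; apply: nc; split.
    by move=> y; rewrite mem_filter => /andP [_ /HU1].
  by move=> r; apply: NNPP => H2; apply: H; exists r.
have rT : r \in rows T by apply: NNPP => H; apply: Hr => /H.
have nh : ~~ has (row_sat T r.1) V by apply/negP => H; apply: Hr.
have key : forall w', w' \in U -> row_sat T r.1 w' -> w' = w.
  move=> w' w'U sat; apply/eqP; apply: NNPP => /negP ne; move/negP: nh; apply.
  by apply/hasP; exists w' => //; rewrite mem_filter /= ne.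
exists r; split => //.
have /hasP [w0 w0U sat] := HU2 r rT.
by rewrite -(key w0 w0U sat).
Qed.

Lemma is_l_exists psi k T n : bounded_measure psi -> rows T <> [::] ->
  (exists U, uniq U /\ is_irr_cover psi k T n U) -> exists m, is_l psi k T n m.
Proof.
move=> Hpsi rne [U [uU iU]].
have [N HN] := omega_bound k T n Hpsi.
pose P := (fun m => exists U, [/\ uniq U, is_irr_cover psi k T n U & size U = m]).
have P0 : P (size U) by exists U.
have PB : forall y, P y -> y <= N.
  by move=> y [V [uV iV <-]]; apply: HN uV iV.1.1.
have [m [Pm Hm]] := cmax P0 PB.
exists m; right; split => //.
  by case: Pm => V [uV iV sV]; exists V.
by move=> V uV iV; apply: Hm; exists V.
Qed.

Lemma sum_le_n (V : seq (seq (nat * nat))) (f : seq (nat * nat) -> nat) n :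
  (forall w, w \in V -> f w <= n) -> \sum_(w <- V) f w <= size V * n.
Proof.
elim: V => [|w V IH] H; first by rewrite big_nil.
rewrite big_cons mulSn; apply: leq_add; first by apply: H; rewrite inE eqxx.
by apply: IH => w' w'in; apply: H; rewrite inE w'in orbT.
Qed.

Lemma dir1 psi k A n : bounded_measure psi -> 2 <= k -> closed_class k A ->
  L_defined psi k A n -> H_defined psi k A n.
Proof.
move=> Hpsi k2 [wfA clA] /fin_bound_inv [B HB].
have k0 : 0 < k by apply: leq_trans k2.
apply: (@fin_bound _ (n * B)) => m [T [AT [[a [Ha an]] Hd]]].
case: Hd => [[_ ->]//|[rne _ Hmin]].
case: Ha => [[E _]//|[_ [G [HG Ga]] _]].
pose P := tree_paths G.
have cU0 : is_cover psi k T n (map fst P).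
  split.
    move=> w /mapP [p pP ->]; rewrite /in_Omega_n (tree_path_words HG pP) /=.
    apply: leq_trans an; rewrite -Ga /tree_psi.
    exact: (leq_bigmax_seq p pP isT).
  move=> r /(match HG with And4 _ _ h _ => h end) H; by rewrite has_map.
have [V [uV iV sV]] := irr_sub cU0.
have [l Hl] := is_l_exists Hpsi rne (ex_intro _ V (conj uV iV)).
have lB : l <= B by apply: HB; exists T.
have Vl : size V <= l.
  case: Hl => [[E _]//|[_ _ Hm]]; exact: Hm.
pose dec w := nth 0 (map snd P) (index w (map fst P)).
pose W := [seq (w, dec w) | w <- V].
have WP : forall p, p \in W -> p \in P.
  move=> p /mapP [w wV ->]; have wP := sV w wV.
  have ilt : index w (map fst P) < size P by rewrite -(size_map fst) index_mem.
  rewrite /dec (nth_map ([::], 0) 0 snd ilt).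
  move: ilt; set j := index w (map fst P) => ilt.
  have Ej : (nth ([::], 0) P j).1 = w.
    by rewrite -(nth_map ([::], 0) [::] fst ilt) nth_index.
  rewrite -[in (w, _)]Ej -surjective_pairing; exact: mem_nth.
have [D [HD Dle]] := det_exists Hpsi k0 (wfA T AT)
  (fun p pW => tree_path_words HG (WP p pW))
  (fun p pW => match HG with And4 _ _ _ h => h p (WP p pW) end)
  (fun r rin => ltac:(rewrite has_map /=; rewrite -/(preim _ _);
      have := (proj2 (proj1 iV)) r rin; rewrite (eq_has (a2 := row_sat T r.1)) //)).
apply: leq_trans (Hmin D HD) _; apply: leq_trans Dle _.
rewrite big_map; apply: leq_trans (sum_le_n (f := fun w => psiw psi w) (n := n) _) _.
  by move=> w /iV.1.1 /andP [].
by rewrite mulnC leq_mul2l (leq_trans Vl lB) orbT.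
Qed.

Fixpoint chain (w : seq (nat * nat)) (d : nat) : dnode :=
  match w with
  | [::] => DLeaf d
  | (a, v) :: w' => DNode a [:: (v, chain w' d)]
  end.

Lemma chain_paths w d : node_paths (chain w d) = [:: (w, d)].
Proof. by elim: w => [|[a v] w IH] //; rewrite node_paths_node /= IH. Qed.

Lemma chain_attrs w d : node_attrs (chain w d) = map fst w.
Proof. by elim: w => [|[a v] w IH] //; rewrite node_attrs_node /= IH cats0. Qed.

Lemma chain_ok k w d : all (fun q => q.2 < k) w -> node_ok false k (chain w d).
Proof.
elim: w => [|[a v] w IH] // /andP [vk Hw].
by rewrite node_ok_node /= vk IH.
Qed.

Lemma dir2 psi k A n : bounded_measure psi -> 2 <= k -> closed_class k A ->
  H_defined psi k A n -> L_defined psi k A n.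
Proof.
move=> Hpsi k2 [wfA clA] /fin_bound_inv [B HB].
have k0 : 0 < k by apply: leq_trans k2.
apply: (@fin_bound _ (k ^ B)) => m [T [AT Hl]].
case: Hl => [[_ Em0]|[rne [U [uU [[[HU1 HU2] Hirr] Em]]] _]]; first by rewrite Em0.
move: Em => /esym Em; subst m.
have wfT := wfA T AT.
set m := size U.
pose nu (x : seq nat) : seq nat :=
  if has (fun i => row_sat T x (nth [::] U i)) (iota 0 m)
  then [seq i <- iota 0 m | row_sat T x (nth [::] U i)] else [:: 0].
have nu_dec : forall x, decset (nu x).
  move=> x; rewrite /nu /decset; case: ifP => // Hh.
  rewrite sorted_filter ?iota_ltn_sorted //=; last exact: ltn_trans.
  by apply/eqP => E; move: Hh; rewrite has_filter E.
pose T' := opJ nu T.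
have AT' : A T'.
  apply/clA; exists T; split => //; exists [::], nu; split => //; split => //.
  by rewrite (opI_nil wfT).
have wfT' := wfA T' AT'.
have rne' : rows T' <> [::] by rewrite /T' /=; case: (rows T) rne.
have mpos : 0 < m.
  case E: (rows T) rne => [//|r rs] _; have := HU2 r; rewrite E inE eqxx => /(_ isT).
  by rewrite /m; case: (U).
pose G' := [seq chain (nth [::] U i) i | i <- iota 0 m].
have G'paths : tree_paths G' = [seq (nth [::] U i, i) | i <- iota 0 m].
  rewrite /tree_paths /G' -map_comp; elim: (iota 0 m) => //= i s ->.
  by rewrite chain_paths.
have Um : forall i, i < m -> nth [::] U i \in U by move=> i; apply: mem_nth.
have HG' : is_tree false k T' G'.
  split.
  - rewrite /tree_ok /= size_map size_iota mpos /= all_map; apply/allP => i.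
    rewrite mem_iota add0n => /= /Um /HU1 /andP [Hall _]; apply: chain_ok.
    by apply/allP => q /(allP Hall) /andP [].
  - move=> x; rewrite /tree_attrs /G' -map_comp => /flattenP [s /mapP [i]].
    rewrite mem_iota add0n => /Um /HU1 /andP [Hall _] -> /=; rewrite chain_attrs.
    by case/mapP => q /(allP Hall) /andP [qa _] ->.
  - move=> r /mapP [r0 r0in ->] /=; rewrite G'paths has_map.
    have /hasP [w wU sat] := HU2 r0 r0in.
    apply/hasP; exists (index w U); first by rewrite mem_iota add0n index_mem.
    by rewrite /= nth_index.
  - move=> p; rewrite G'paths => /mapP [i]; rewrite mem_iota add0n => /= im ->.
    rewrite /lambda_or_common /= /sub_rows /=; apply/allP => r.
    rewrite mem_filter => /andP [sat /mapP [r0 r0in Er]]; rewrite Er /= in sat *.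
    have Hh : has (fun i0 => row_sat T r0.1 (nth [::] U i0)) (iota 0 m).
      by apply/hasP; exists i => //; rewrite mem_iota add0n.
    by rewrite /nu Hh mem_filter mem_iota add0n im leq0n; apply/andP; split; [exact: sat|].
have [a [[Ga [HGa Gaeq]] Hamin]] := @cmin (fun a => exists G, is_tree false k T' G /\ tree_psi psi G = a) (tree_psi psi G') (ex_intro _ G' (conj HG' erefl)).
have an : a <= n.
  apply: leq_trans (Hamin _ (ex_intro _ G' (conj HG' erefl))) _.
  rewrite /tree_psi G'paths; apply/bigmax_leqP_seq => p /mapP [i]; rewrite mem_iota add0n => /= im -> _.
  by have /andP [_ ->] := HU1 _ (Um i im).
have [D0 [HD0 _]] := det_exists Hpsi k0 wfT'
  (fun p pin => tree_path_words HG' pin)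
  (fun p pin => match HG' with And4 _ _ _ h => h p pin end)
  (match HG' with And4 _ _ h _ => h end).
have [d [[D [HD Dd]] Hdmin]] := @cmin (fun a => exists G, is_tree true k T' G /\ tree_psi psi G = a) (tree_psi psi D0) (ex_intro _ D0 (conj HD0 erefl)).
have dB : d <= B.
  apply: HB; exists T'; split => //; split.
    exists a; split => //; right; split => //; first by exists Ga.
    by move=> G HG; apply: Hamin; exists G.
  right; split => //; first by exists D.
  by move=> G HG; apply: Hdmin; exists G.
apply: leq_trans (leq_pexp2l k0 dB).
case: (HD) => /and3P [_ /eqP sz1 Hok] _ Hcov Hcom.
have [v Dv] : exists v, D = [:: v] by case: (D) sz1 => [|v [|]] //; exists v.
have Dpaths : tree_paths D = node_paths v by rewrite Dv /tree_paths /= cats0.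
apply: (@leq_trans (size (tree_paths D))).
  rewrite -(size_map snd) -{1}(size_iota 0 m); apply: uniq_leq_size; first exact: iota_uniq.
  move=> i; rewrite mem_iota add0n => /= im.
  have [r [rin sat uniqr]] := special_row (conj (conj HU1 HU2) Hirr) (Um i im).
  have r'in : (r.1, nu r.1) \in rows T' by apply: (map_f (fun r0 => (r0.1, nu r0.1)) rin).
  have /hasP [p pin psat] := Hcov _ r'in.
  have := allP (Hcom p pin) (r.1, nu r.1); rewrite mem_filter psat r'in => /(_ isT) /=.
  have Hh : has (fun i0 => row_sat T r.1 (nth [::] U i0)) (iota 0 m).
    by apply/hasP; exists i => //; rewrite mem_iota add0n.
  rewrite /nu Hh mem_filter mem_iota add0n => /andP [sat2 /= p2m].
  have E := uniqr _ (Um _ p2m) sat2.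
  have : p.2 = i by apply/eqP; rewrite -(nth_uniq [::] p2m im uU) E.
  by move=> <-; apply: map_f.
rewrite Dpaths; apply: count_paths => //; first by rewrite Dv /= andbT in Hok.
move=> p pin; rewrite -Dd -(size_map fst).
case: Hpsi => _ Hsz; apply: leq_trans (Hsz _) _.
by rewrite /tree_psi Dpaths; exact: (leq_bigmax_seq p pin isT).
Qed.

Theorem theorem1 (psi : seq nat -> nat) (k : nat) (A : table -> Prop) :
  bounded_measure psi -> 2 <= k -> closed_class k A -> nontrivial A ->
  (forall n, H_defined psi k A n) <-> (forall n, L_defined psi k A n).
Proof.
move=> Hpsi k2 clA _; split => H n.
  exact: dir2.
exact: dir1.
Qed.
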